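(* Let $L$ be a simple finite-dimensional Lie algebra over a field $K$ of characteristic different from $2$ and $3$. Then $C(L)=0$, i.e. every skew-symmetric bilinear form $\varphi:L\times L\to K$ satisfying $\varphi([x,y],z)=\varphi([z,x],y)$ for all $x,y,z\in L$ is zero. *)

(* Defs.v *)
(* Finite-dimensional Lie algebras over a field K are modelled
   as a finite-dimensional K-vector space V (a vectType K) with a bracket. *)
From HB Require Import structures.
From mathcomp Require Import all_boot all_order all_algebra.
Set Implicit Arguments. Unset Strict Implicit. Unset Printing Implicit Defensive.
Import GRing.Theory.
Local Open Scope ring_scope.

Definition is_lie_bracket (K : fieldType) (V : vectType K) (br : V -> V -> V) : Prop :=
  [/\ (forall (a : K) (x y z : V), br (a *: x + y) z = a *: br x z + br y z),
      (forall (a : K) (x y z : V), br x (a *: y + z) = a *: br x y + br x z),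
      (forall x : V, br x x = 0) &
      (forall x y z : V, br x (br y z) + br y (br z x) + br z (br x y) = 0)].

Definition lie_ideal (K : fieldType) (V : vectType K) (br : V -> V -> V)
    (I : {vspace V}) : Prop :=
  forall x y : V, y \in I -> br x y \in I.

Definition lie_simple (K : fieldType) (V : vectType K) (br : V -> V -> V) : Prop :=
  (exists x y : V, br x y != 0) /\
  (forall I : {vspace V}, lie_ideal br I -> I = 0%VS \/ I = fullv).

Definition bilinear_form (K : fieldType) (V : vectType K) (phi : V -> V -> K) : Prop :=
  (forall (a : K) (x y z : V), phi (a *: x + y) z = a * phi x z + phi y z) /\
  (forall (a : K) (x y z : V), phi x (a *: y + z) = a * phi x y + phi x z).

Definition skew_symmetric (K : fieldType) (V : vectType K) (phi : V -> V -> K) : Prop :=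
  forall x y : V, phi x y = - phi y x.

(* Main.v *)
Require Import Defs.
From HB Require Import structures.
From mathcomp Require Import all_boot all_order all_algebra.
From mathcomp Require Import ring.
Import GRing.Theory.
Local Open Scope ring_scope.

Lemma curv_zero (K : fieldType) (T : Type) (F : T -> T -> T -> T -> K)
  (h2 : 2%:R != 0 :> K)
  (A1 : forall x y z w, F x y z w = - F y x z w)
  (A2 : forall x y z w, F x y z w = - F x y w z)
  (A3 : forall x y z w, F x y z w = - F z w x y)
  (B : forall x y z w, F x y z w + F y z x w + F z x y w = 0) :
  forall x y z w, F x y z w = 0.
Proof.
move=> z x y w.
have B1 := B x y z w. have B2 := B y z w x.
have B3 := B z w x y. have B4 := B w x y z.
rewrite [F x y w z]A2 in B4.
rewrite [F y z w x]A2 [F z w y x]A2 in B2.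
rewrite [F w x z y]A2 in B3.
rewrite [F x z w y]A1 [F z x w y]A2 opprK in B3.
rewrite [F y w x z]A1 [F w y x z]A2 opprK in B4.
have E : F w y z x = F z x y w by rewrite A3 [F z x w y]A2 opprK.
rewrite E in B2 B4.
move: B1 B2 B3 B4.
set p := F z x y w; set a := F x y z w; set b := F y z x w;
set c := F z w x y; set d := F w x y z => B1 B2 B3 B4.
have H : p *+ 4 = (a + b + p) + (- b + - c + p) + (c + - d + p) + (d + - a + p)
  by ring.
rewrite B1 B2 B3 B4 !addr0 -mulr_natl in H.
move/eqP: H; rewrite mulf_eq0 => /orP[|/eqP//].
by rewrite (natrM K 2 2) mulf_eq0 (negbTE h2).
Qed.

Theorem lemma1p4 (K : fieldType) (V : vectType K) (br : V -> V -> V)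
  (hchar2 : 2%N \notin [pchar K]) (hchar3 : 3%N \notin [pchar K])
  (hlie : is_lie_bracket br) (hsimple : lie_simple br)
  (phi : V -> V -> K) (hbil : bilinear_form phi) (hskew : skew_symmetric phi)
  (hcyc : forall x y z : V, phi (br x y) z = phi (br z x) y) :
  forall x y : V, phi x y = 0.
Proof.
have h2 : (2%:R : K) != 0.
  by apply: contraNneq hchar2 => h; rewrite inE /= h eqxx.
case: hlie => brL brR brxx jac; case: hbil => phL phR.
have dbl (W : zmodType) (x : W) : x = x + x -> x = 0.
  by move=> h; apply: (addrI x); rewrite addr0 -h.
have br0l z : br 0 z = 0.
  by apply: dbl; have := brL 1 0 0 z; rewrite scaler0 add0r scale1r.
have br0r z : br z 0 = 0.
  by apply: dbl; have := brR 1 z 0 0; rewrite scaler0 add0r scale1r.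
have ph0l z : phi 0 z = 0.
  by apply: dbl; have := phL 1 0 0 z; rewrite scaler0 add0r mul1r.
have ph0r z : phi z 0 = 0.
  by apply: dbl; have := phR 1 z 0 0; rewrite scaler0 add0r mul1r.
have brDl x y z : br (x + y) z = br x z + br y z.
  by have := brL 1 x y z; rewrite !scale1r.
have brDr x y z : br z (x + y) = br z x + br z y.
  by have := brR 1 z x y; rewrite !scale1r.
have anti x y : br y x = - br x y.
  have := brxx (x + y); rewrite brDl !brDr !brxx add0r addr0 => /eqP.
  by rewrite addr_eq0 => /eqP ->; rewrite opprK.
have phNl x z : phi (- x) z = - phi x z.
  by have := phL (-1) x 0 z; rewrite scaleN1r addr0 ph0l addr0 mulN1r.
have phNr x z : phi z (- x) = - phi z x.
  by have := phR (-1) z x 0; rewrite scaleN1r addr0 ph0r addr0 mulN1r.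
have phDl x y z : phi (x + y) z = phi x z + phi y z.
  by have := phL 1 x y z; rewrite scale1r mul1r.
pose F x y z w := phi (br x y) (br z w).
have hF : forall x y z w, F x y z w = 0.
  apply: (@curv_zero K V F h2).
  - by move=> x y z w; rewrite /F (anti x y) phNl opprK.
  - by move=> x y z w; rewrite /F (anti z w) phNr opprK.
  - by move=> x y z w; rewrite /F hskew.
  move=> x y z w.
  have G a b c d : F a b c d = - phi (br (br a b) c) d.
    by rewrite /F hskew hcyc.
  rewrite !G -!opprD -!phDl.
  rewrite [br (br x y) z]anti [br (br y z) x]anti [br (br z x) y]anti.
  rewrite -!opprD phNl.
  have -> : br z (br x y) + br x (br y z) + br y (br z x) = 0.
    by rewrite -(jac x y z) [RHS]addrC addrA.
  by rewrite ph0l !oppr0.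
pose b := vbasis (fullv : {vspace V}).
pose s := [seq br u v | u <- b, v <- b].
pose I := <<s>>%VS.
have brSl n (c : 'I_n -> K) (v : 'I_n -> V) w :
    br (\sum_i c i *: v i) w = \sum_i c i *: br (v i) w.
  by elim/big_rec2: _ => [|i A B _ <-]; [exact: br0l | exact: brL].
have brSr n (c : 'I_n -> K) (v : 'I_n -> V) w :
    br w (\sum_i c i *: v i) = \sum_i c i *: br w (v i).
  by elim/big_rec2: _ => [|i A B _ <-]; [exact: br0r | exact: brR].
have phSl n (c : 'I_n -> K) (v : 'I_n -> V) w :
    phi (\sum_i c i *: v i) w = \sum_i c i * phi (v i) w.
  by elim/big_rec2: _ => [|i A B _ <-]; [exact: ph0l | exact: phL].
have phSr n (c : 'I_n -> K) (v : 'I_n -> V) w :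
    phi w (\sum_i c i *: v i) = \sum_i c i * phi w (v i).
  by elim/big_rec2: _ => [|i A B _ <-]; [exact: ph0r | exact: phR].
have brI u v : br u v \in I.
  rewrite (coord_vbasis (memvf u)) brSl; apply: rpred_sum => i _.
  apply: rpredZ; rewrite (coord_vbasis (memvf v)) brSr.
  apply: rpred_sum => j _; apply: rpredZ; apply: memv_span.
  by apply: allpairs_f; apply: mem_nth; rewrite size_tuple.
have hI : lie_ideal br I by move=> x y _; exact: brI.
case: (hsimple.2 I hI) => HI.
  case: hsimple.1 => x [y]; have := brI x y; rewrite HI memv0 => ->.
  by [].
move=> x y.
have xs : x \in <<in_tuple s>>%VS by rewrite /= -/I HI memvf.
have ys : y \in <<in_tuple s>>%VS by rewrite /= -/I HI memvf.
rewrite (coord_span xs) phSl big1 // => i _.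
rewrite (coord_span ys) phSr big1 ?mulr0 // => j _.
have memS (k : nat) : (k < size s)%N -> exists u v, (in_tuple s)`_k = br u v.
  move=> hk; have /allpairsP [[u v] [_ _ ->]] := mem_nth 0 hk.
  by exists u, v.
have [u [v ->]] := memS i (ltn_ord i).
have [u' [v' ->]] := memS j (ltn_ord j).
by have := hF u v u' v'; rewrite /F => ->; rewrite mulr0.
Qed.
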